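(* Let $$\begin{array}{ccc} A & \xrightarrow{\varphi} & B\\ {\scriptstyle\varphi'}\downarrow & & \downarrow{\scriptstyle\psi}\\ C & \xrightarrow{\psi'} & D\end{array}$$ be a commutative square of local homomorphisms of noetherian local rings (so $\psi\circ\varphi=\psi'\circ\varphi'$), where $(A,m,K)$ is the local ring at the corner. Define $\operatorname{rd}(\mathcal S):=(\operatorname{rd}(\varphi)+\operatorname{rd}(\psi))-(\operatorname{rd}(\varphi')+\operatorname{rd}(\psi'))$. For a proper ideal $I$ of $A$, let $(A/I)\otimes_A\mathcal S$ denote the induced commutative square with maps $\varphi_I\colon A/I\to B/IB$, $\varphi'_I\colon A/I\to C/IC$, $\psi_{IB}\colon B/IB\to D/ID$, $\psi'_{IC}\colon C/IC\to D/ID$, and define $\operatorname{rd}((A/I)\otimes_A\mathcal S):=(\operatorname{rd}(\varphi_I)+\operatorname{rd}(\psi_{IB}))-(\operatorname{rd}(\varphi'_I)+\operatorname{rd}(\psi'_{IC}))$; in particular $K\otimes_A\mathcal S$ is the case $I=m$. Then for every proper ideal $I$ of $A$, $$\operatorname{rd}(\mathcal S)=\operatorname{rd}((A/I)\otimes_A\mathcal S)=\operatorname{rd}(K\otimes_A\mathcal S)=\operatorname{rd}(\psi_{mB})-\operatorname{rd}(\psi'_{mC}),$$ where $\psi_{mB}\colon B/mB\to D/mD$ and $\psi'_{mC}\colon C/mC\to D/mD$ are the induced maps.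
   Context: All rings are commutative and noetherian with identity; ring homomorphisms are unital. A local homomorphism $\varphi\colon (A,m,K)\to(B,n,L)$ is a ring homomorphism between local rings with $\varphi(m)\subseteq n$; here $K=A/m$, $L=B/n$. The regularity defect $\operatorname{rd}(\varphi)$ is the $L$-dimension of the kernel of the natural $L$-linear map $m/m^2\otimes_K L\to n/n^2$, $\bar x\otimes\bar b\mapsto \overline{\varphi(x)b}$. For a local homomorphism $\varphi\colon A\to B$ and an ideal $I$ of $A$, $\varphi_I\colon A/I\to B/IB$ denotes the induced map. *)

(* Defs.v *)
(* Commutative rings are modelled as [comUnitRingType]s
   (non-trivial commutative rings with their unit predicate); ideals are
   predicates [R -> Prop]. *)
From HB Require Import structures.
From mathcomp Require Import all_boot all_order all_algebra.
From Stdlib Require Import ClassicalEpsilon.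
Set Implicit Arguments. Unset Strict Implicit. Unset Printing Implicit Defensive.
Import GRing.Theory.
Local Open Scope ring_scope.

Section RingDefs.
Variable R : comUnitRingType.

Definition is_ideal (I : R -> Prop) : Prop :=
  [/\ I 0, (forall x y, I x -> I y -> I (x + y)) & (forall r x, I x -> I (r * x))].

Definition is_proper_ideal (I : R -> Prop) : Prop := is_ideal I /\ ~ I 1.

Definition zero_ideal : R -> Prop := fun x => x = 0.

Definition fin_gen (I : R -> Prop) : Prop :=
  exists s : seq R, forall x, I x <->
    exists c : seq R, x = \sum_(i < size s) c`_i * s`_i.

Definition noetherian : Prop := forall I, is_ideal I -> fin_gen I.

(* the set of non-units; R is local iff it is an ideal (the maximal ideal) *)
Definition maxid : R -> Prop := fun x => x \isn't a GRing.unit.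
Definition is_local : Prop := is_ideal maxid.

Definition local_noetherian : Prop := is_local /\ noetherian.

Definition prod_ideal (M N : R -> Prop) : R -> Prop := fun y =>
  exists s : seq (R * R), (forall p, p \in s -> M p.1 /\ N p.2) /\
    y = \sum_(p <- s) p.1 * p.2.

Definition msq_plus (I : R -> Prop) : R -> Prop := fun x =>
  exists y z, prod_ideal maxid maxid y /\ I z /\ x = y + z.

(* x_0..x_{e-1} in m whose images form a basis of the cotangent space of R/I,
   i.e. of  m/(m^2 + I)  over the residue field K = R/m *)
Definition cot_basis (I : R -> Prop) (e : nat) (x : 'I_e -> R) : Prop :=
  [/\ (forall i, maxid (x i)),
      (forall a : 'I_e -> R, msq_plus I (\sum_(i < e) a i * x i) ->
          forall i, maxid (a i)) &
      (forall y, maxid y -> exists a : 'I_e -> R,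
          msq_plus I (y - \sum_(i < e) a i * x i))].
End RingDefs.

Definition ext (R S : comUnitRingType) (f : R -> S) (I : R -> Prop) : S -> Prop :=
  fun y => exists s : seq (R * S), (forall p, p \in s -> I p.1) /\
    y = \sum_(p <- s) f p.1 * p.2.

Definition local_hom (R S : comUnitRingType) (f : {rmorphism R -> S}) : Prop :=
  forall x, maxid x -> maxid (f x).

(* Regularity defect of the induced map  f_I : R/I -> S/J  (J = I S).
   Given a basis x of m/(m^2+I) over K, the space  m/(m^2+I) (x)_K L  is
   identified with L^e (L = S/n), and the map to n/(n^2+J) sends the coordinate
   vector (b_i)_i to  sum_i f(x_i) b_i.  A family b_0..b_{k-1} of vectors of L^e
   (given by lifts in S) lies in the kernel and is L-linearly independent: *)
Definition ker_family (R S : comUnitRingType) (f : {rmorphism R -> S})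
  (J : S -> Prop) (e : nat) (x : 'I_e -> R) (k : nat) (b : 'I_k -> 'I_e -> S) : Prop :=
  (forall j, msq_plus J (\sum_(i < e) f (x i) * b j i)) /\
  (forall c : 'I_k -> S, (forall i, maxid (\sum_(j < k) c j * b j i)) ->
      forall j, maxid (c j)).

(* r is the L-dimension of that kernel *)
Definition rd_rel_spec (R S : comUnitRingType) (f : {rmorphism R -> S})
  (I : R -> Prop) (J : S -> Prop) (r : nat) : Prop :=
  exists e (x : 'I_e -> R), cot_basis I x /\
    (exists b : 'I_r -> 'I_e -> S, ker_family f J x b) /\
    (forall k (b : 'I_k -> 'I_e -> S), ker_family f J x b -> (k <= r)%N).

Definition rd_rel (R S : comUnitRingType) (f : {rmorphism R -> S})
  (I : R -> Prop) (J : S -> Prop) : nat :=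
  epsilon (inhabits 0%N) (rd_rel_spec f I J).

(* rd(f_I) for  f_I : R/I -> S/IS *)
Definition rdq (R S : comUnitRingType) (f : {rmorphism R -> S}) (I : R -> Prop) : nat :=
  rd_rel f I (ext f I).

Definition rd (R S : comUnitRingType) (f : {rmorphism R -> S}) : nat :=
  rdq f (@zero_ideal R).

(* Main.v *)
Require Import Defs.
From HB Require Import structures.
From mathcomp Require Import all_boot all_order all_algebra.
From mathcomp Require Import ring zify.
From Stdlib Require Import ClassicalEpsilon FunctionalExtensionality PropExtensionality Classical.
Set Implicit Arguments. Unset Strict Implicit. Unset Printing Implicit Defensive.
Import GRing.Theory.
Local Open Scope ring_scope.


Section Ideals.
Variable R : comUnitRingType.
Implicit Types P Q : R -> Prop.

Lemma id0 P : is_ideal P -> P 0. Proof. by case. Qed.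
Lemma idD P x y : is_ideal P -> P x -> P y -> P (x + y). Proof. by case=> _ h _; apply: h. Qed.
Lemma idM P r x : is_ideal P -> P x -> P (r * x). Proof. by case=> _ _ h; apply: h. Qed.
Lemma idMr P r x : is_ideal P -> P x -> P (x * r). Proof. by move=> hP hx; rewrite mulrC; apply: idM. Qed.
Lemma idN P x : is_ideal P -> P x -> P (- x).
Proof. by move=> hP hx; rewrite -mulN1r; apply: idM. Qed.
Lemma idB P x y : is_ideal P -> P x -> P y -> P (x - y).
Proof. by move=> hP hx hy; apply: idD => //; apply: idN. Qed.
Lemma idsumseq P (T : eqType) (s : seq T) (F : T -> R) : is_ideal P ->
  (forall t, t \in s -> P (F t)) -> P (\sum_(t <- s) F t).
Proof.
move=> hP; elim: s => [|t s IH] hF; first by rewrite big_nil; exact: id0.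
rewrite big_cons; apply: idD => //; first by apply: hF; rewrite mem_head.
by apply: IH => u hu; apply: hF; rewrite in_cons hu orbT.
Qed.

Lemma idsum P n (F : 'I_n -> R) : is_ideal P -> (forall i, P (F i)) -> P (\sum_(i < n) F i).
Proof. by move=> hP hF; apply: idsumseq. Qed.

Definition good P := is_ideal P /\ (forall a y, maxid a -> maxid y -> P (a * y)).

Lemma prod_sub P : good P -> forall z, prod_ideal (@maxid R) (@maxid R) z -> P z.
Proof.
move=> [hP h2] z [s [hs ->]]; apply: idsumseq => // t /hs [? ?]; exact: h2.
Qed.

Lemma prod_ideal_ideal : is_local R -> is_ideal (prod_ideal (@maxid R) (@maxid R)).
Proof.
move=> hl; split.
- by exists [::]; rewrite big_nil.
- move=> x y [s [hs ->]] [t [ht ->]]; exists (s ++ t); rewrite big_cat; split => //.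
  by move=> p; rewrite mem_cat => /orP[/hs|/ht].
- move=> r x [s [hs ->]]; exists [seq (r * p.1, p.2) | p <- s]; split.
  + move=> p /mapP [q /hs [h1 h2] ->] /=; split => //; exact: (idM _ hl).
  + by rewrite big_map mulr_sumr; apply: eq_bigr => p _ /=; rewrite mulrA.
Qed.

Lemma msq_ideal J : is_local R -> is_ideal J -> good (msq_plus J).
Proof.
move=> hl hJ; have hp := prod_ideal_ideal hl; split; first split.
- exists 0, 0; split; first exact: (id0 hp).
  by split; [exact: id0 | rewrite addr0].
- move=> x y [a [b [ha [hb ->]]]] [c [d [hc [hd ->]]]].
  exists (a + c), (b + d); split; first exact: idD.
  by split; [exact: idD | rewrite addrACA].
- move=> r x [a [b [ha [hb ->]]]]; exists (r * a), (r * b).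
  by split; [exact: idM | split; [exact: idM | rewrite mulrDr]].
- move=> a y ha hy; exists (a * y), 0; split; last split; [|exact: id0|by rewrite addr0].
  by exists [:: (a, y)]; rewrite big_seq1; split => // p; rewrite inE => /eqP ->.
Qed.

Lemma msq_sub (J : R -> Prop) : is_ideal J -> forall z, J z -> msq_plus J z.
Proof.
move=> hJ z hz; exists 0, z; split; last by rewrite add0r.
by exists [::]; rewrite big_nil.
Qed.

Lemma msq_mono (J J' : R -> Prop) : (forall z, J z -> J' z) -> forall z, msq_plus J z -> msq_plus J' z.
Proof. by move=> h z [a [b [ha [hb ->]]]]; exists a, b; split => //; split => //; apply: h. Qed.

Lemma maxid_ideal : is_local R -> is_ideal (@maxid R). Proof. by []. Qed.

Lemma proper_sub (I : R -> Prop) : is_local R -> is_proper_ideal I -> forall x, I x -> @maxid R x.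
Proof.
move=> hl [hI h1] x hx; apply/negP => hu; apply: h1.
by rewrite -(mulVr hu); apply: idM.
Qed.

End Ideals.

Section Ext.
Variables (R S : comUnitRingType) (f : {rmorphism R -> S}).

Lemma ext_ideal I : is_ideal (ext f I).
Proof.
split.
- by exists [::]; rewrite big_nil.
- move=> x y [s [hs ->]] [t [ht ->]]; exists (s ++ t); rewrite big_cat; split => //.
  by move=> p; rewrite mem_cat => /orP[/hs|/ht].
- move=> r x [s [hs ->]]; exists [seq (p.1, r * p.2) | p <- s]; split.
  + by move=> p /mapP [q /hs h ->].
  + by rewrite big_map mulr_sumr; apply: eq_bigr => p _ /=; rewrite mulrCA.
Qed.

Lemma ext_min I (Q : S -> Prop) : is_ideal Q -> (forall i, I i -> Q (f i)) ->
  forall z, ext f I z -> Q z.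
Proof.
move=> hQ hI z [s [hs ->]]; apply: idsumseq => // p /hs hp.
by apply: idMr => //; apply: hI.
Qed.

Lemma ext_in I i : I i -> ext f I (f i).
Proof. by move=> hi; exists [:: (i, 1)]; rewrite big_seq1 mulr1; split => // p; rewrite inE => /eqP ->. Qed.

Lemma ext_mono I I' : (forall z, I z -> I' z) -> forall z, ext f I z -> ext f I' z.
Proof. by move=> h; apply: ext_min; [exact: ext_ideal | move=> i /h; exact: ext_in]. Qed.

Lemma ext_zero : ext f (@zero_ideal R) = @zero_ideal S.
Proof.
apply: functional_extensionality => z; apply: propositional_extensionality; split.
- apply: ext_min => [|i ->]; last by rewrite /zero_ideal rmorph0.
  rewrite /zero_ideal; split => [//|x y -> ->|r x ->]; by rewrite ?addr0 ?mulr0.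
- by move=> ->; exact: (id0 (ext_ideal _)).
Qed.

Lemma ext_local I : local_hom f -> (forall x, I x -> maxid x) -> is_local S ->
  forall z, ext f I z -> maxid z.
Proof. by move=> hf hI hl; apply: ext_min => // i /hI /hf. Qed.

End Ext.

Lemma ext_comp (A B D : comUnitRingType) (phi : {rmorphism A -> B}) (psi : {rmorphism B -> D}) I :
  ext psi (ext phi I) = ext (psi \o phi) I.
Proof.
apply: functional_extensionality => z; apply: propositional_extensionality; split.
- apply: ext_min; first exact: ext_ideal.
  move=> u; apply: (@ext_min _ _ phi I (fun u => ext (psi \o phi) I (psi u))).
  + split; rewrite /= ?rmorph0; first exact: (id0 (ext_ideal _ _)).
    * by move=> x y hx hy; rewrite rmorphD; apply: idD => //; exact: ext_ideal.
    * by move=> r x hx; rewrite rmorphM; apply: idM => //; exact: ext_ideal.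
  + by move=> i hi; exists [:: (i, 1)]; rewrite big_seq1 mulr1; split => // p; rewrite inE => /eqP ->.
- move=> [s [hs ->]]; apply: idsumseq; first exact: ext_ideal.
  move=> p /hs hp; apply: idMr; first exact: ext_ideal.
  by apply: ext_in; apply: ext_in.
Qed.


Record lring := LRing { lr :> comUnitRingType; lr_loc : is_local lr }.

Section Res.
Local Open Scope quotient_scope.
Variable R : lring.
Definition mpred : {pred R} := fun x => x \isn't a GRing.unit.

Lemma mpred_idealr : idealr_closed mpred.
Proof.
have [h0 hD hM] := lr_loc R.
split.
- by rewrite unfold_in.
- by rewrite unfold_in /mpred /= negbK unitr1.
move=> a u v; rewrite !unfold_in /= => hu hv.
exact: (hD _ _ (hM a u hu) hv).
Qed.

HB.instance Definition _ := isIdealr.Build R mpred mpred_idealr.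

Definition res := {ideal_quot mpred}.
HB.instance Definition _ := GRing.ComNzRing.on res.

Definition pim (x : R) : res := \pi_res x.
Fact pim_zmod : zmod_morphism pim.
Proof. by move=> x y; rewrite /pim (rmorphB (\pi_res : R -> res)). Qed.
Fact pim_monoid : monoid_morphism pim.
Proof. by split=> [|x y]; rewrite /pim ?(rmorph1 (\pi_res : R -> res)) ?(rmorphM (\pi_res : R -> res)). Qed.
HB.instance Definition _ := GRing.isZmodMorphism.Build R res pim pim_zmod.
HB.instance Definition _ := GRing.isMonoidMorphism.Build R res pim pim_monoid.

Lemma pim0P x : (pim x == 0) = ~~ (x \is a GRing.unit).
Proof. by rewrite /pim -(rmorph0 (\pi_res : R -> res)) -Quotient.idealrBE subr0. Qed.

Lemma pimK (q : res) : pim (repr q) = q.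
Proof. exact: reprK. Qed.

Definition resinv (q : res) : res := pim (repr q)^-1.

Lemma resmulVf (q : res) : q != 0 -> resinv q * q = 1.
Proof.
move=> hq; have hu : repr q \is a GRing.unit.
  by apply: contraNT hq; rewrite -pim0P pimK.
by rewrite /resinv -{2}[q]pimK -rmorphM mulVr // rmorph1.
Qed.

Lemma resinv0 : resinv 0 = 0.
Proof.
have h : ~~ (repr (0 : res) \is a GRing.unit) by rewrite -pim0P pimK.
by rewrite /resinv (invr_out h) pimK.
Qed.

HB.instance Definition _ := GRing.ComNzRing_isField.Build res resmulVf resinv0.

Lemma pim0 x : pim x = 0 <-> maxid x.
Proof. by rewrite /maxid -pim0P; split => [->|/eqP]. Qed.

End Res.


Definition bas (R : comUnitRingType) (P : R -> Prop) d (y : 'I_d -> R) :=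
  [/\ (forall i, maxid (y i)),
      (forall a : 'I_d -> R, P (\sum_(i < d) a i * y i) -> forall i, maxid (a i)) &
      (forall z, maxid z -> exists a : 'I_d -> R, P (z - \sum_(i < d) a i * y i))].

Section Lin.
Variable S : lring.
Implicit Types P : S -> Prop.

Lemma L_comb P e d (u : 'I_e -> S) (M : 'M[S]_(e,d)) (y : 'I_d -> S) (c : 'I_e -> S) :
  is_ideal P -> (forall i, P (u i - \sum_l M i l * y l)) ->
  P (\sum_i c i * u i - \sum_l (\sum_i c i * M i l) * y l).
Proof.
move=> hP h.
have <- : \sum_i c i * (u i - \sum_l M i l * y l) =
          \sum_i c i * u i - \sum_l (\sum_i c i * M i l) * y l.
  rewrite (eq_bigr _ (fun i _ => mulrBr _ _ _)) sumrB; congr (_ - _).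
  under eq_bigr => i _ do rewrite mulr_sumr.
  rewrite exchange_big /=; apply: eq_bigr => l _; rewrite mulr_suml.
  by apply: eq_bigr => i _; rewrite mulrA.
by apply: idsum => // i; apply: idM.
Qed.

Lemma L_indep P d (y : 'I_d -> S) a : bas P y -> P (\sum_l a l * y l) -> forall l, pim (a l) = 0.
Proof. by case=> _ h _ /h ha l; apply/pim0. Qed.

Lemma L_m2 P d (y : 'I_d -> S) a : good P -> (forall l, maxid (y l)) ->
  (forall l, pim (a l) = 0) -> P (\sum_l a l * y l).
Proof.
move=> [hP h2] hy ha; apply: idsum => // l; apply: h2 => //; exact/pim0.
Qed.

Lemma sum_delta n (i : 'I_n) (F : 'I_n -> S) : \sum_l (i == l)%:R * F l = F i.
Proof.
rewrite (bigD1 i) //= eqxx mul1r big1 ?addr0 // => l hl.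
by rewrite eq_sym (negPf hl) mul0r.
Qed.

Lemma express P d (y : 'I_d -> S) k (z : 'I_k -> S) : bas P y -> (forall i, maxid (z i)) ->
  exists Z : 'M[S]_(k,d), forall i, P (z i - \sum_l Z i l * y l).
Proof.
case=> _ _ hs hz.
have [a ha] := fin_all_exists (fun i => hs _ (hz i)).
by exists (\matrix_(i, l) a i l) => i; under eq_bigr => l _ do rewrite mxE.
Qed.

Lemma ident P d (y : 'I_d -> S) (A : 'M[S]_d) : bas P y -> is_ideal P ->
  (forall i, P (y i - \sum_l A i l * y l)) -> map_mx (@pim S) A = 1%:M.
Proof.
move=> hb hP h; apply/matrixP => i l; rewrite !mxE.
have H : pim ((i == l)%:R - A i l) = 0.
  apply: (L_indep (a := fun l => (i == l)%:R - A i l) hb).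
  rewrite (eq_bigr _ (fun l _ => mulrBl _ _ _)) sumrB sum_delta; exact: h.
by move/eqP: H; rewrite rmorphB subr_eq0 => /eqP <-; rewrite rmorph_nat.
Qed.
End Lin.


Section Lin2.
Variable S : lring.
Implicit Types P : S -> Prop.

Lemma bas_le P d d' (y : 'I_d -> S) (y' : 'I_d' -> S) : is_ideal P ->
  bas P y -> bas P y' -> (d <= d')%N.
Proof.
move=> hP hy hy'.
have [Pm hPm] := express (z := y) hy' (let: And3 h _ _ := hy in h).
have [Qm hQm] := express (z := y') hy (let: And3 h _ _ := hy' in h).
have hid : map_mx (@pim S) (Pm *m Qm) = 1%:M.
  apply: (ident hy hP) => i.
  have h2 := L_comb (fun j => Pm i j) hP hQm.
  under eq_bigr => l _ do rewrite mxE.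
  rewrite -(subrK (\sum_j Pm i j * y' j) (y i)) -addrA.
  by apply: idD => //; apply: hPm.
have := mxrank1 (res S) d; rewrite -hid map_mxM => <-.
exact: leq_trans (mxrankM_maxl _ _) (rank_leq_col _).
Qed.

Lemma bas_uniq P d d' (y : 'I_d -> S) (y' : 'I_d' -> S) : is_ideal P ->
  bas P y -> bas P y' -> d = d'.
Proof. by move=> hP hy hy'; apply/eqP; rewrite eqn_leq (bas_le hP hy hy') (bas_le hP hy' hy). Qed.

Lemma extract P : good P -> forall k (g : 'I_k -> S), (forall i, maxid (g i)) ->
  (forall z, maxid z -> exists a : 'I_k -> S, P (z - \sum_i a i * g i)) ->
  exists d (y : 'I_d -> S), bas P y.
Proof.
move=> [hP h2]; elim => [|k IH] g hg hs.
  by exists 0%N, g; split => // a _ [].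
case: (classic (forall a : 'I_k.+1 -> S, P (\sum_i a i * g i) -> forall i, maxid (a i))) => hind.
  by exists k.+1, g; split.
have [a ha] := not_all_ex_not _ _ hind.
have [hPa hn] := imply_to_and _ _ ha.
have [j hj] := not_all_ex_not _ _ hn.
have hu : a j \is a GRing.unit by apply/negPn/negP.
apply: (IH (fun i => g (lift j i))) => [i|z hz]; first exact: hg.
have [c hc] := hs z hz.
pose k0 := c j * (a j)^-1.
exists (fun i => c (lift j i) - k0 * a (lift j i)).
have E : z - \sum_(i < k) (c (lift j i) - k0 * a (lift j i)) * g (lift j i) =
   (z - \sum_i c i * g i) + k0 * \sum_i a i * g i.
  rewrite !(bigD1_ord j) //=.
  rewrite (eq_bigr _ (fun i _ => mulrBl _ _ _)) sumrB.
  have -> : \sum_(i < k) k0 * a (lift j i) * g (lift j i) = k0 * \sum_(i < k) a (lift j i) * g (lift j i).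
    by rewrite mulr_sumr; apply: eq_bigr => i _; rewrite mulrA.
  have e1 : k0 * (a j * g j) = c j * g j by rewrite /k0 mulrA -(mulrA (c j)) mulVr // mulr1.
  rewrite mulrDr e1; ring.
by rewrite E; apply: idD => //; apply: idM.
Qed.

Lemma bas_exists P : good P -> noetherian S -> exists d (y : 'I_d -> S), bas P y.
Proof.
move=> hg hn; have [s hs] := hn _ (lr_loc S).
apply: (extract hg (g := fun i : 'I_(size s) => s`_i)).
- move=> i; apply/hs; exists (mkseq (fun j => (j == i)%:R) (size s)).
  rewrite -(sum_delta i (fun l : 'I_(size s) => s`_l)).
  by apply: eq_bigr => l _; rewrite nth_mkseq // eq_sym.
- move=> z /hs [c ->]; exists (fun i => c`_i); rewrite subrr; exact: (id0 hg.1).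
Qed.

Lemma rowfreeP k e (B : 'M[S]_(k,e)) :
  (forall c : 'I_k -> S, (forall i, maxid (\sum_j c j * B j i)) -> forall j, maxid (c j))
  <-> row_free (map_mx (@pim S) B).
Proof.
split => [h | hf c hc j].
- rewrite -kermx_eq0; apply/eqP/row_matrixP => r; rewrite row0.
  set v := row r (kermx _).
  have hv : v *m map_mx (@pim S) B = 0 by rewrite /v -row_mul mulmx_ker row0.
  clearbody v; apply/rowP => j; rewrite [RHS]mxE -(pimK (v 0 j)); apply/pim0.
  apply: (h (fun j => repr (v 0 j))) => i; apply/pim0.
  move/rowP: hv => /(_ i); rewrite !mxE => hv; rewrite -[RHS]hv rmorph_sum.
  by apply: eq_bigr => l _; rewrite rmorphM /= pimK mxE.
- set cv := \row_j pim (c j).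
  have : cv *m map_mx (@pim S) B = 0 *m map_mx (@pim S) B.
    rewrite mul0mx; apply/rowP => i; rewrite !mxE.
    rewrite -[RHS]((pim0 _).2 (hc i)) rmorph_sum.
    by apply: eq_bigr => l _; rewrite rmorphM !mxE.
  by move/(row_free_inj hf)/rowP/(_ j); rewrite !mxE => /pim0.
Qed.

End Lin2.


Section Claim2.
Variable S : lring.
Implicit Types P N : S -> Prop.

Lemma sum_subl n (a b y : 'I_n -> S) :
  \sum_l (a l - b l) * y l = \sum_l a l * y l - \sum_l b l * y l.
Proof. by rewrite -sumrB; apply: eq_bigr => l _; rewrite mulrBl. Qed.

Lemma claim2 N N' e d d'' (u : 'I_e -> S) (y : 'I_d -> S) (y2 : 'I_d'' -> S) (M : 'M[S]_(e,d)) :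
  good N -> good N' -> (forall z, N z -> N' z) -> bas N y -> bas N' y2 ->
  (forall i, N' (u i)) -> (forall z, N' z -> exists c : 'I_e -> S, N (z - \sum_i c i * u i)) ->
  (forall i, N (u i - \sum_l M i l * y l)) ->
  (\rank (map_mx (@pim S) M) + d'')%N = d.
Proof.
move=> gN gN' hNN' hy hy2 hu hH2 hM.
have iN := gN.1; have iN' := gN'.1.
have ym : forall l, maxid (y l) by case: hy.
have y2m : forall l, maxid (y2 l) by case: hy2.
set V := map_mx (@pim S) M.
pose rowv (a : 'I_d -> S) : 'rV[res S]_d := \row_l pim (a l).
have Cle : forall a, (rowv a <= V)%MS -> N' (\sum_l a l * y l).
  move=> a /submxP [w hw]; pose c i := repr (w 0 i).
  have hN : N (\sum_l (a l - \sum_i c i * M i l) * y l).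
    apply: L_m2 => // l; apply/eqP; rewrite rmorphB subr_eq0 rmorph_sum /=; apply/eqP.
    move/rowP: hw => /(_ l); rewrite !mxE => ->.
    by apply: eq_bigr => i _; rewrite rmorphM /= pimK mxE.
  have h1 := L_comb c iN hM.
  have h2 : N' (\sum_i c i * u i) by apply: idsum => // i; apply: idM.
  rewrite sum_subl in hN.
  set A := \sum_l a l * y l in hN *; set Bs := \sum_l _ * y l in hN h1.
  set C := \sum_i c i * u i in h1 h2.
  have -> : A = (A - Bs) - (C - Bs) + C by ring.
  by apply: idD => //; apply: idB => //; apply: hNN'.
have Cge : forall a, N' (\sum_l a l * y l) -> (rowv a <= V)%MS.
  move=> a /hH2 [c hc]; have h1 := L_comb c iN hM.
  have h3 : N (\sum_l (a l - \sum_i c i * M i l) * y l).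
    by rewrite sum_subl -(subrK (\sum_i c i * u i) (\sum_l a l * y l)) -addrA; apply: idD.
  apply/submxP; exists (\row_i pim (c i)); apply/rowP => l; rewrite !mxE.
  have := L_indep hy h3 l; move/eqP; rewrite rmorphB subr_eq0 rmorph_sum /= => /eqP ->.
  by apply: eq_bigr => i _; rewrite rmorphM !mxE.
have [Y2 hY2] := express hy y2m.
have [Y1 hY1] := express hy2 ym.
set W := map_mx (@pim S) Y2.
have fW : row_free W.
  apply/rowfreeP => c hc j.
  have h1 := L_comb c iN hY2.
  have h2 : N (\sum_l (\sum_j c j * Y2 j l) * y l) by apply: L_m2 => // l; apply/pim0.
  case: hy2 => _ hind _; apply: hind => //; apply: hNN'.
  by rewrite -(subrK (\sum_l (\sum_j c j * Y2 j l) * y l) (\sum_i c i * y2 i)); apply: idD.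
have dWV : (W :&: V)%MS = 0.
  apply/eqP; rewrite -submx0; apply/row_subP => r.
  set v := row r (W :&: V)%MS.
  have vW : (v <= W)%MS := submx_trans (row_sub r _) (capmxSl _ _).
  have vV : (v <= V)%MS := submx_trans (row_sub r _) (capmxSr _ _).
  clearbody v; move/submxP: vW => [w hw]; pose c j := repr (w 0 j).
  have ev : v = rowv (fun l => \sum_j c j * Y2 j l).
    apply/rowP => l; rewrite hw !mxE rmorph_sum; apply: eq_bigr => j _.
    by rewrite rmorphM /= pimK mxE.
  have h1 := Cle (fun l => \sum_j c j * Y2 j l) (etrans (congr1 (fun t => (t <= V)%MS) (esym ev)) vV).
  have h2 := L_comb c iN hY2.
  have h3 : N' (\sum_i c i * y2 i).
    rewrite -(subrK (\sum_l (\sum_j c j * Y2 j l) * y l) (\sum_i c i * y2 i)).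
    by apply: idD => //; apply: hNN'.
  have w0 : w = 0.
    apply/rowP => j; rewrite mxE -[w 0 j]pimK; apply/pim0.
    by case: hy2 => _ hind _; apply: (hind c h3).
  by rewrite hw w0 mul0mx sub0mx.
have sWV : (1%:M <= W + V)%MS.
  apply/row_subP => l.
  pose b l' := (l == l')%:R - \sum_j Y1 l j * Y2 j l'.
  have hb : N' (\sum_l' b l' * y l').
    rewrite sum_subl sum_delta.
    have h1 := L_comb (fun j => Y1 l j) iN hY2.
    rewrite -(subrK (\sum_j Y1 l j * y2 j) (y l)) -addrA.
    by apply: (idD iN'); [apply: hY1 | apply: hNN'].
  have -> : row l (1%:M : 'M[res S]_d) = row l (map_mx (@pim S) Y1) *m W + rowv b.
    apply/rowP => l'; rewrite !mxE rmorphB rmorph_sum /= rmorph_nat.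
    rewrite [X in X + _](_ : _ = \sum_(i < d'') pim (Y1 l i * Y2 i l')); first by rewrite addrC subrK.
    by apply: eq_bigr => j _; rewrite rmorphM !mxE.
  exact: addmx_sub_adds (submxMl _ _) (Cge _ hb).
have r1 : \rank (W + V)%MS = d.
  apply/eqP; rewrite eqn_leq rank_leq_col /=.
  by have := mxrankS sWV; rewrite mxrank1.
have := mxrank_disjoint_sum dWV; rewrite r1 (eqP fW) => h.
lia.
Qed.

End Claim2.


Definition edim (R : comUnitRingType) (P : R -> Prop) : nat :=
  epsilon (inhabits 0%N) (fun d => exists y : 'I_d -> R, bas P y).

Lemma edim_spec (R : lring) (P : R -> Prop) : good P -> noetherian R ->
  exists y : 'I_(edim P) -> R, bas P y.
Proof.
move=> gP nR; have [d hd] := bas_exists gP nR.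
exact: (epsilon_spec (inhabits 0%N) (fun d => exists y : 'I_d -> R, bas P y) (ex_intro _ d hd)).
Qed.

Lemma edim_eq (R : lring) (P : R -> Prop) d (y : 'I_d -> R) : good P -> noetherian R ->
  bas P y -> edim P = d.
Proof.
move=> gP nR hy; have [y' hy'] := edim_spec gP nR.
exact: bas_uniq gP.1 hy' hy.
Qed.

Section KeyD.
Variables (R S : lring) (f : {rmorphism R -> S}).
Hypotheses (hf : local_hom f) (nR : noetherian R) (nS : noetherian S).
Variable I : R -> Prop.
Hypotheses (hI : is_ideal I) (hIm : forall x, I x -> maxid x).

Let N := msq_plus (ext f I).
Let N' := msq_plus (ext f (@maxid R)).
Let PR := msq_plus I.

Let gPR : good PR := msq_ideal (lr_loc R) hI.
Let gN : good N := msq_ideal (lr_loc S) (ext_ideal f I).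
Let gN' : good N' := msq_ideal (lr_loc S) (ext_ideal f _).

Let NN' z : N z -> N' z.
Proof. by apply: msq_mono; apply: ext_mono. Qed.

Section Basis.
Variables (e : nat) (x : 'I_e -> R).
Hypothesis hx : bas PR x.
Variables (y : 'I_(edim N) -> S) (y2 : 'I_(edim N') -> S).
Hypotheses (hy : bas N y) (hy2 : bas N' y2).
Variable M : 'M[S]_(e, edim N).
Hypothesis hM : forall i, N (f (x i) - \sum_l M i l * y l).

Let V := map_mx (@pim S) M.

Lemma H2 z : N' z -> exists c : 'I_e -> S, N (z - \sum_i c i * f (x i)).
Proof.
pose Q w := exists c : 'I_e -> S, N (w - \sum_i c i * f (x i)).
have iN := gN.1.
have iQ : is_ideal Q.
  split.
  - exists (fun _ => 0); rewrite big1 ?subr0 => [|i _]; [exact: id0 | exact: mul0r].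
  - move=> w1 w2 [c1 h1] [c2 h2]; exists (fun i => c1 i + c2 i).
    have -> : w1 + w2 - \sum_i (c1 i + c2 i) * f (x i) =
      (w1 - \sum_i c1 i * f (x i)) + (w2 - \sum_i c2 i * f (x i)).
      by rewrite (eq_bigr _ (fun i _ => mulrDl _ _ _)) big_split /=; ring.
    exact: idD.
  - move=> r w [c h]; exists (fun i => r * c i).
    have -> : r * w - \sum_i r * c i * f (x i) = r * (w - \sum_i c i * f (x i)).
      by rewrite mulrBr mulr_sumr; congr (_ - _); apply: eq_bigr => i _; rewrite mulrA.
    exact: idM.
have hQ : forall u, maxid u -> Q (f u).
  move=> u hu; case: hx => _ _ /(_ u hu) [a [p [q [hp [hq E]]]]].
  exists (fun i => f (a i)).
  have -> : f u - \sum_i f (a i) * f (x i) = f p + f q.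
    by rewrite -rmorphD -E rmorphB rmorph_sum; congr (_ - _); apply: eq_bigr => i _; rewrite rmorphM.
  apply: idD => //.
  - case: hp => s [hs ->]; rewrite rmorph_sum; apply: idsumseq => // t /hs [h1 h2].
    by rewrite rmorphM; apply: gN.2; apply: hf.
  - by apply: msq_sub; [exact: ext_ideal | exact: ext_in].
move=> [p [w [hp [hw ->]]]].
apply: (idD (P := Q) iQ); last exact: (ext_min iQ hQ hw).
exists (fun _ => 0); rewrite big1 ?subr0 => [|i _]; last exact: mul0r.
exact: (@prod_sub _ _ gN _ hp).
Qed.

Lemma rk_rel : (\rank V + edim N')%N = edim N.
Proof.
apply: (claim2 gN gN' NN' hy hy2 _ H2 hM) => i.
apply: msq_sub; [exact: ext_ideal | apply: ext_in; case: hx => h _ _; exact: h].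
Qed.

Lemma kf_char k (b : 'I_k -> 'I_e -> S) :
  ker_family f (ext f I) x b <->
  row_free (map_mx (@pim S) (\matrix_(j, i) b j i)) /\
  map_mx (@pim S) (\matrix_(j, i) b j i) *m V = 0.
Proof.
set B := \matrix_(j, i) b j i.
have EB c i : \sum_j c j * B j i = \sum_j c j * b j i by apply: eq_bigr => j _; rewrite mxE.
have iN := gN.1.
have hc j := L_comb (fun i => b j i) iN hM.
have ym : forall l, maxid (y l) by case: hy.
have Eprod j l : (map_mx (@pim S) B *m V) j l = pim (\sum_i b j i * M i l).
  rewrite !mxE rmorph_sum; apply: eq_bigr => i _; by rewrite rmorphM !mxE.
split.
- move=> [hk hind]; split.
    by apply/rowfreeP => c hc'; apply: hind => i; rewrite -EB; apply: hc'.
  apply/matrixP => j l; rewrite Eprod mxE.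
  apply: (L_indep hy (a := fun l => \sum_i b j i * M i l)).
  have -> : \sum_l (\sum_i b j i * M i l) * y l =
     \sum_i b j i * f (x i) - (\sum_i b j i * f (x i) - \sum_l (\sum_i b j i * M i l) * y l).
    by rewrite opprB addrC subrK.
  apply: idB => //; first by under eq_bigr do rewrite mulrC; exact: (hk j).
- move=> [hfree h0]; split.
  + move=> j.
    have h2 : N (\sum_l (\sum_i b j i * M i l) * y l).
      apply: L_m2 => // l; rewrite -Eprod h0 mxE //.
    under eq_bigr do rewrite mulrC.
    rewrite -(subrK (\sum_l (\sum_i b j i * M i l) * y l) (\sum_i b j i * f (x i))).
    exact: (idD iN (hc j) h2).
  + move=> c hc'; have := (rowfreeP B).2 hfree c; apply => i; rewrite EB; exact: hc'.
Qed.

Lemma spec_r r : ((exists b : 'I_r -> 'I_e -> S, ker_family f (ext f I) x b) /\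
    (forall k (b : 'I_k -> 'I_e -> S), ker_family f (ext f I) x b -> (k <= r)%N)) ->
  r = \rank (kermx V).
Proof.
move=> [[b hb] hmax]; apply/eqP; rewrite eqn_leq; apply/andP; split.
- move/kf_char: hb => [hfree h0].
  rewrite -{1}(eqP hfree); apply: mxrankS; exact/sub_kermxP.
- set Kb := row_base (kermx V).
  pose b' (j : 'I_(\rank (kermx V))) (i : 'I_e) := repr (Kb j i).
  have eK : map_mx (@pim S) (\matrix_(j, i) b' j i) = Kb.
    by apply/matrixP => j i; rewrite [in LHS]mxE [in LHS]mxE /b' /= pimK.
  apply: (hmax _ b'); apply/kf_char; rewrite eK; split; first exact: row_base_free.
  by apply/sub_kermxP; rewrite eq_row_base.
Qed.

Lemma spec_exists : exists b : 'I_(\rank (kermx V)) -> 'I_e -> S, ker_family f (ext f I) x b /\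
    (forall k (b : 'I_k -> 'I_e -> S), ker_family f (ext f I) x b -> (k <= \rank (kermx V))%N).
Proof.
set Kb := row_base (kermx V).
pose b' (j : 'I_(\rank (kermx V))) (i : 'I_e) := repr (Kb j i).
have eK : map_mx (@pim S) (\matrix_(j, i) b' j i) = Kb.
  by apply/matrixP => j i; rewrite [in LHS]mxE [in LHS]mxE /b' /= pimK.
exists b'; split.
  apply/kf_char; rewrite eK; split; first exact: row_base_free.
  by apply/sub_kermxP; rewrite eq_row_base.
move=> k b /kf_char [hfree h0].
rewrite -(eqP hfree); apply: mxrankS; exact/sub_kermxP.
Qed.

Lemma basis_formula r : ((exists b : 'I_r -> 'I_e -> S, ker_family f (ext f I) x b) /\
    (forall k (b : 'I_k -> 'I_e -> S), ker_family f (ext f I) x b -> (k <= r)%N)) ->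
  (r + edim N = e + edim N')%N.
Proof.
move/spec_r => ->; rewrite mxrank_ker.
have := rank_leq_row V; have := rk_rel; lia.
Qed.

End Basis.

Lemma keyD : (rdq f I + edim N = edim PR + edim N')%N.
Proof.
have [y hy] := edim_spec gN nS.
have [y2 hy2] := edim_spec gN' nS.
have [x0 hx0] := edim_spec gPR nR.
have sp : forall e (x : 'I_e -> R), bas PR x -> exists r, rd_rel_spec f I (ext f I) r.
  move=> e x hx.
  have [M hM] := express (z := fun i => f (x i)) hy (fun i => hf (let: And3 h _ _ := hx in h i)).
  have [b [hb hmax]] := spec_exists hy hM.
  by exists (\rank (kermx (map_mx (@pim S) M))), e, x; split => //; split => //; exists b.
have [r0 hr0] := sp _ _ hx0.
have := epsilon_spec (inhabits 0%N) (rd_rel_spec f I (ext f I)) (ex_intro _ r0 hr0).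
rewrite /rdq /rd_rel; move: (epsilon _ _) => r [e [x [hx [hb hmax]]]].
have hx' : bas PR x := hx.
have [M hM] := express (z := fun i => f (x i)) hy (fun i => hf (let: And3 h _ _ := hx' in h i)).
have := basis_formula hx' hy hy2 hM (conj hb hmax).
by rewrite (bas_uniq gPR.1 hx0 hx').
Qed.

End KeyD.


Lemma keyD' (R S : comUnitRingType) (f : {rmorphism R -> S}) :
  local_noetherian R -> local_noetherian S -> local_hom f ->
  forall I : R -> Prop, is_ideal I -> (forall x, I x -> maxid x) ->
  (rdq f I + edim (msq_plus (ext f I)) =
   edim (msq_plus I) + edim (msq_plus (ext f (@maxid R))))%N.
Proof.
move=> [lR nR] [lS nS] hf I hI hIm.
exact: (@keyD (LRing lR) (LRing lS) f hf nR nS I hI hIm).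
Qed.

Lemma ext_ext (R S : comUnitRingType) (f g : {rmorphism R -> S}) I :
  (forall x, f x = g x) -> ext f I = ext g I.
Proof.
move=> E; apply: functional_extensionality => y; apply: propositional_extensionality.
by split => -[s [h ->]]; exists s; split => //; apply: eq_bigr => p _; rewrite E.
Qed.

Theorem theorem3p4 (A B C D : comUnitRingType)
  (phi : {rmorphism A -> B}) (phi' : {rmorphism A -> C})
  (psi : {rmorphism B -> D}) (psi' : {rmorphism C -> D}) :
  local_noetherian A -> local_noetherian B ->
  local_noetherian C -> local_noetherian D ->
  local_hom phi -> local_hom phi' -> local_hom psi -> local_hom psi' ->
  (forall a, psi (phi a) = psi' (phi' a)) ->
  forall I : A -> Prop, is_proper_ideal I ->
  let rdS : int := (rd phi + rd psi)%N%:Z - (rd phi' + rd psi')%N%:Z in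
  let rdSI : int := (rdq phi I + rdq psi (ext phi I))%N%:Z
                    - (rdq phi' I + rdq psi' (ext phi' I))%N%:Z in
  let rdSK : int := (rdq phi (@maxid A) + rdq psi (ext phi (@maxid A)))%N%:Z
                    - (rdq phi' (@maxid A) + rdq psi' (ext phi' (@maxid A)))%N%:Z in
  [/\ rdS = rdSI, rdSI = rdSK &
      rdSK = (rdq psi (ext phi (@maxid A)))%:Z - (rdq psi' (ext phi' (@maxid A)))%:Z].
Proof.
move=> hA hB hC hD lphi lphi' lpsi lpsi' comm I hIp rdS rdSI rdSK.
have hAl := hA.1; have hBl := hB.1; have hCl := hC.1; have hDl := hD.1.
have zI (R : comUnitRingType) : is_local R -> is_ideal (@zero_ideal R) /\ (forall x, zero_ideal x -> @maxid R x).
  move=> hl; split; last by move=> x ->; exact: (id0 hl).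
  by rewrite /zero_ideal; split => [//|x y -> ->|r x ->]; rewrite ?addr0 ?mulr0.
have [zA zAm] := zI _ hAl; have [zB zBm] := zI _ hBl; have [zC zCm] := zI _ hCl.
have hI := hIp.1; have hIm := proper_sub hAl hIp.
have mA := maxid_ideal hAl.
have e1 := keyD' hA hB lphi hI hIm.
have e2 := keyD' hA hB lphi zA zAm.
have e3 := keyD' hA hB lphi mA (fun x h => h).
have e1' := keyD' hA hC lphi' hI hIm.
have e2' := keyD' hA hC lphi' zA zAm.
have e3' := keyD' hA hC lphi' mA (fun x h => h).
have e4 := keyD' hB hD lpsi (ext_ideal phi I) (ext_local lphi hIm hBl).
have e5 := keyD' hB hD lpsi zB zBm.
have e6 := keyD' hB hD lpsi (ext_ideal phi _) (ext_local lphi (fun x h => h) hBl).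
have e4' := keyD' hC hD lpsi' (ext_ideal phi' I) (ext_local lphi' hIm hCl).
have e5' := keyD' hC hD lpsi' zC zCm.
have e6' := keyD' hC hD lpsi' (ext_ideal phi' _) (ext_local lphi' (fun x h => h) hCl).
have cI J : ext psi (ext phi J) = ext psi' (ext phi' J).
  by rewrite !ext_comp; apply: ext_ext => a /=; exact: comm.
rewrite ext_zero in e2; rewrite ext_zero in e2'; rewrite ext_zero in e5; rewrite ext_zero in e5'.
rewrite cI in e4; rewrite cI in e6.
rewrite /rdS /rdSI /rdSK /rd.
split; lia.
Qed.
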